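(* Assume the setting below ($2\overline{s}$-sparse flatness, in the form of the reconstruction maps $\alpha_I$). Let $\mathcal{I}\subseteq\{1,\dots,p\}$ with $|\mathcal{I}|>p-2\overline{s}$ be such that $\mathrm{Check}(\mathcal{I})$ returns UNSAT. Then there exists $\mathcal{I}_{temp}\subseteq\mathcal{I}$ with $|\mathcal{I}_{temp}|\le p-2\overline{s}+1$ such that $\mathrm{Check}(\mathcal{I}_{temp})$ also returns UNSAT.
   Context: Consider the discrete-time system $x^{(t+1)}=f(x^{(t)},u^{(t)})$, $y^{(t)}=h(x^{(t)})+a^{(t)}$, with state in $\mathcal{X}\subseteq\mathbb{R}^n$, input in $\mathbb{R}^m$, and $p$ scalar sensors $y_i=h_i(x)+a_i$, where $a^{(t)}$ is an arbitrary attack vector. Fix a window length $\tau$ and an input sequence $u$ over the window. For sensor $i$, $H_{u,i}:\mathcal{X}\to\mathbb{R}^\tau$ maps the window-initial state $z$ to $\big(h_i(z),h_i(f_{u^{(1)}}(z)),\dots,h_i(f_{u^{(\tau-1)}\cdots u^{(1)}}(z))\big)$ ($k$-fold compositions of $f(\cdot,u^{(j)})$), and $H_{u,I}=(H_{u,i})_{i\in I}$. $Y=(Y_1,\dots,Y_p)$, $Y_i\in\mathbb{R}^\tau$, are the collected (possibly attacked) measurements over the window, and $Y_I=(Y_i)_{i\in I}$. $\overline{s}\le p/2$ is the bound on attacked sensors. The system is assumed $2\overline{s}$-sparse flat: for every set $I$ of sensors with $|I|\ge p-2\overline{s}$, the outputs of the sensors in $I$ form a flat output, so that there is a reconstruction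 map $\alpha_I:\mathbb{R}^{\tau|I|}\to\mathcal{X}$ with $\alpha_I(H_{u,I}(z))=z$ for all $z\in\mathcal{X}$. For such $I$, the procedure $\mathrm{Check}(I)$ computes $x:=\alpha_I(Y_I)$ and returns SAT if $\|Y_I-H_{u,I}(x)\|=0$ and UNSAT otherwise. *)

(* Defs.v *)
From mathcomp Require Import all_boot all_algebra.
From mathcomp Require Import reals.
Set Implicit Arguments. Unset Strict Implicit. Unset Printing Implicit Defensive.
Local Open Scope ring_scope.

Fixpoint traj (R : realType) (n m : nat)
  (f : 'rV[R]_n -> 'rV[R]_m -> 'rV[R]_n) (u : nat -> 'rV[R]_m)
  (k : nat) (z : 'rV[R]_n) : 'rV[R]_n :=
  match k with
  | 0 => z
  | k'.+1 => f (traj f u k' z) (u k'.+1)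
  end.

Definition Hu (R : realType) (n m p tau : nat)
  (f : 'rV[R]_n -> 'rV[R]_m -> 'rV[R]_n) (h : 'I_p -> 'rV[R]_n -> R)
  (u : nat -> 'rV[R]_m) (i : 'I_p) (z : 'rV[R]_n) : 'rV[R]_tau :=
  \row_(k < tau) h i (traj f u k z).

(* the sensors of a set I, used as index type of Y_I and H_{u,I} *)
Definition sens (p : nat) (I : {set 'I_p}) : Type := {i : 'I_p | i \in I}.

Definition Check_SAT (R : realType) (n m p tau : nat)
  (f : 'rV[R]_n -> 'rV[R]_m -> 'rV[R]_n) (h : 'I_p -> 'rV[R]_n -> R)
  (u : nat -> 'rV[R]_m)
  (alpha : forall I : {set 'I_p}, (sens I -> 'rV[R]_tau) -> 'rV[R]_n)
  (Y : 'I_p -> 'rV[R]_tau) (I : {set 'I_p}) : Prop :=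
  let x := alpha I (fun i : sens I => Y (val i)) in
  forall i : sens I, Y (val i) - Hu tau f h u (val i) x = 0.

Definition Check_UNSAT (R : realType) (n m p tau : nat)
  (f : 'rV[R]_n -> 'rV[R]_m -> 'rV[R]_n) (h : 'I_p -> 'rV[R]_n -> R)
  (u : nat -> 'rV[R]_m)
  (alpha : forall I : {set 'I_p}, (sens I -> 'rV[R]_tau) -> 'rV[R]_n)
  (Y : 'I_p -> 'rV[R]_tau) (I : {set 'I_p}) : Prop :=
  ~ Check_SAT f h u alpha Y I.

(* Main.v *)
Require Import Defs.
From mathcomp Require Import all_boot all_algebra.
From mathcomp Require Import reals.
From Stdlib Require Import Classical FunctionalExtensionality.
Import GRing.Theory.
Local Open Scope ring_scope.

Lemma ex_sub (T : finType) (I : {set T}) k : (k <= #|I|)%N -> exists J : {set T}, J \subset I /\ #|J| = k.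
Proof.
elim: k => [|k IH] Hk; first by exists set0; rewrite sub0set cards0.
have [J [JI cJ]] := IH (ltnW Hk).
have : (0 < #|I :\: J|)%N by rewrite cardsD (setIidPr JI) cJ subn_gt0.
case/card_gt0P=> x; rewrite inE => /andP[xJ xI].
exists (x |: J); split; first by rewrite subUset sub1set xI.
by rewrite cardsU1 xJ cJ.
Qed.

Theorem lemma1 (R : realType) (n m p tau sbar : nat)
  (X : 'rV[R]_n -> Prop)
  (f : 'rV[R]_n -> 'rV[R]_m -> 'rV[R]_n)
  (h : 'I_p -> 'rV[R]_n -> R)
  (u : nat -> 'rV[R]_m)
  (alpha : forall I : {set 'I_p}, (sens I -> 'rV[R]_tau) -> 'rV[R]_n)
  (Y : 'I_p -> 'rV[R]_tau) :
  (2 * sbar <= p)%N ->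
  (forall x v, X x -> X (f x v)) ->
  (* alpha_I : R^{tau |I|} -> X *)
  (forall (I : {set 'I_p}) (W : sens I -> 'rV[R]_tau), (p - 2 * sbar <= #|I|)%N -> X (alpha I W)) ->
  (* 2 sbar-sparse flatness: alpha_I (H_{u,I} z) = z on X *)
  (forall (I : {set 'I_p}) z, (p - 2 * sbar <= #|I|)%N -> X z ->
     alpha I (fun i : sens I => Hu tau f h u (val i) z) = z) ->
  forall I : {set 'I_p},
    (p - 2 * sbar < #|I|)%N ->
    Check_UNSAT f h u alpha Y I ->
    exists Itemp : {set 'I_p},
      [/\ Itemp \subset I,
          (p - 2 * sbar <= #|Itemp|)%N,
          (#|Itemp| <= p - 2 * sbar + 1)%N &
          Check_UNSAT f h u alpha Y Itemp].
Proof.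
move=> _ _ HX Hflat I HI Hun.
set k := (p - 2 * sbar)%N in HX Hflat HI *.
apply: NNPP => Hno.
have Hsat : forall J : {set 'I_p}, J \subset I -> #|J| = k.+1 ->
    Check_SAT f h u alpha Y J.
  move=> J JI cJ; apply: NNPP => Hn; apply: Hno; exists J; split => //.
    by rewrite cJ.
  by rewrite cJ addn1.
have [J0 [J0I cJ0]] := @ex_sub _ I k (ltnW HI).
set x0 := alpha J0 (fun i : sens J0 => Y (val i)).
have key : forall J : {set 'I_p}, J0 \subset J -> J \subset I -> #|J| = k.+1 ->
    forall j, j \in J -> Y j = Hu tau f h u j x0.
  move=> J J0J JI cJ j jJ.
  have S := Hsat J JI cJ.
  set xJ := alpha J (fun i : sens J => Y (val i)) in S.
  have XJ : X xJ by apply: HX; rewrite cJ.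
  have Ey : forall i, i \in J -> Y i = Hu tau f h u i xJ.
    by move=> i iJ; apply/eqP; rewrite -subr_eq0; apply/eqP; exact: (S (exist _ i iJ)).
  have -> : x0 = xJ.
    rewrite /x0 -[RHS](Hflat J0 xJ) ?cJ0 //.
    congr (alpha J0); apply: functional_extensionality => -[i iJ0] /=.
    by apply: Ey; apply: (subsetP J0J).
  exact: Ey.
have : (0 < #|I :\: J0|)%N by rewrite cardsD (setIidPr J0I) cJ0 subn_gt0.
case/card_gt0P=> j1; rewrite inE => /andP[j1J0 j1I].
have EY : forall j, j \in I -> Y j = Hu tau f h u j x0.
  move=> j jI.
  case: (boolP (j \in J0)) => jJ0.
    apply: (key (j1 |: J0)); rewrite ?subsetUr ?subUset ?sub1set ?j1I ?J0I //.
      by rewrite cardsU1 j1J0 cJ0.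
    by rewrite in_setU1 jJ0 orbT.
  apply: (key (j |: J0)); rewrite ?subsetUr ?subUset ?sub1set ?jI ?J0I //.
    by rewrite cardsU1 jJ0 cJ0.
  by rewrite in_setU1 eqxx.
have X0 : X x0 by apply: HX; rewrite cJ0.
have Ea : alpha I (fun i0 : sens I => Y (val i0)) = x0.
  rewrite -[RHS](Hflat I x0) ?(ltnW HI) //.
  congr (alpha I); apply: functional_extensionality => -[i' iI'].
  exact: EY.
apply: Hun; move=> i0.
rewrite Ea.
case: i0 => i iI /=.
apply/eqP; rewrite subr_eq0; apply/eqP; exact: EY.
Qed.
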